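(* Let $f\in C(I)$, the partition $\Delta$ and scaling functions $\alpha_{i,r}\in C(I)$ with $\|\alpha\|_\infty<1$ be fixed. Let $A$ be the set of sequences $b=\{b_r\}_{r\in\mathbb{N}}$ with $b_r\in C(I)$, $b_r(x_0)=f(x_0)$, $b_r(x_N)=f(x_N)$ for all $r$, and $\sup_r\|b_r\|_\infty<\infty$, with the metric $\|b-c\|_\infty=\sup_{r}\|b_r-c_r\|_\infty$. Then the map $\mathcal{A}:A\to C(I)$, $\mathcal{A}(b)=f^\alpha_{\Delta,b}$, is Lipschitz continuous (with respect to the supremum norm on $C(I)$).
   Context: $I=[x_0,x_N]$ with partition $\Delta: x_0<x_1<\dots<x_N$, $I_i=[x_{i-1},x_i]$, $l_i:I\to I_i$ the affine bijection $l_i(x)=\frac{x_i-x_{i-1}}{x_N-x_0}x+\frac{x_Nx_{i-1}-x_0x_i}{x_N-x_0}$, $Q_i=l_i^{-1}$. $\|\alpha\|_\infty:=\sup_r\max_i\|\alpha_{i,r}\|_\infty$. For $b\in A$, $f^\alpha_{\Delta,b}$ (the non-stationary $\alpha$-fractal function) is the uniform limit, independent of $g\in C_f(I)=\{g\in C(I):g(x_0)=f(x_0),g(x_N)=f(x_N)\}$, of $T^{\alpha_1}\circ\cdots\circ T^{\alpha_r}g$, where $(T^{\alpha_r}g)(x)=f(x)+\alpha_{i,r}(Q_i(x))(g-b_r)(Q_i(x))$ for $x\in I_i$. *)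

(* Defs.v *)
From Stdlib Require Import Reals Lra.
Open Scope R_scope.

Definition inI (x : nat -> R) (N : nat) (t : R) : Prop := x 0%nat <= t <= x N.

Definition cont_on (x : nat -> R) (N : nat) (h : R -> R) : Prop :=
  forall t, inI x N t -> forall eps, 0 < eps ->
    exists delta, 0 < delta /\
      forall s, inI x N s -> Rabs (s - t) < delta -> Rabs (h s - h t) < eps.

(* Q_i = l_i^{-1}, where l_i(x) = (x_i - x_{i-1})/(x_N - x_0) x
   + (x_N x_{i-1} - x_0 x_i)/(x_N - x_0). *)
Definition Qi (x : nat -> R) (N i : nat) (y : R) : R :=
  x 0%nat + (x N - x 0%nat) * (y - x (i - 1)%nat) / (x i - x (i - 1)%nat).

(* Index i in {1..N} of the (first) subinterval I_i = [x_{i-1}, x_i] containing t. *)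
Fixpoint find_seg (x : nat -> R) (t : R) (i n : nat) : nat :=
  match n with
  | O => i
  | S n' => if Rle_dec t (x i) then i else find_seg x t (S i) n'
  end.
Definition seg (x : nat -> R) (N : nat) (t : R) : nat := find_seg x t 1%nat (N - 1)%nat.

(* The operator T^{alpha_r}:
   (T^{alpha_r} g)(t) = f(t) + alpha_{i,r}(Q_i t) * (g - b_r)(Q_i t), t in I_i.
   (At the partition nodes both candidate formulas agree for g in C_f(I).) *)
Definition Top (f : R -> R) (x : nat -> R) (N : nat)
  (alpha : nat -> nat -> R -> R) (b : nat -> R -> R) (r : nat) (g : R -> R)
  : R -> R :=
  fun t => let i := seg x N t in
           f t + alpha i r (Qi x N i t) * (g (Qi x N i t) - b r (Qi x N i t)).

Fixpoint compT (f : R -> R) (x : nat -> R) (N : nat)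
  (alpha : nat -> nat -> R -> R) (b : nat -> R -> R) (k n : nat) (g : R -> R)
  : R -> R :=
  match n with
  | O => g
  | S n' => Top f x N alpha b k (compT f x N alpha b (S k) n' g)
  end.

Definition in_Cf (f : R -> R) (x : nat -> R) (N : nat) (g : R -> R) : Prop :=
  cont_on x N g /\ g (x 0%nat) = f (x 0%nat) /\ g (x N) = f (x N).

Definition in_A (f : R -> R) (x : nat -> R) (N : nat) (b : nat -> R -> R) : Prop :=
  (forall r, in_Cf f x N (b r)) /\
  (exists B, forall r t, inI x N t -> Rabs (b r t) <= B).

(* phi is the non-stationary alpha-fractal function f^alpha_{Delta,b}:
   for every g in C_f(I), T^{alpha_1} o ... o T^{alpha_r} g -> phi uniformly on I. *)
Definition is_fractal (f : R -> R) (x : nat -> R) (N : nat)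
  (alpha : nat -> nat -> R -> R) (b : nat -> R -> R) (phi : R -> R) : Prop :=
  forall g, in_Cf f x N g ->
    forall eps, 0 < eps -> exists M : nat, forall n : nat, (M <= n)%nat ->
      forall t, inI x N t -> Rabs (compT f x N alpha b 0 n g t - phi t) < eps.

(* Main.v *)
Require Import Defs.
From Stdlib Require Import Reals Lra Lia.
Open Scope R_scope.

Lemma Rdiv_le_0_compat' (a b : R) : 0 <= a -> 0 < b -> 0 <= a / b.
Proof. intros. unfold Rdiv. apply Rmult_le_pos; [lra|]. left; apply Rinv_0_lt_compat; lra. Qed.

Lemma find_seg_spec (x : nat -> R) (t : R) : forall n i,
  x (i - 1)%nat <= t ->
  let j := find_seg x t i n in
  (i <= j <= i + n)%nat /\ x (j - 1)%nat <= t /\ (t <= x j \/ j = (i + n)%nat).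
Proof.
  induction n as [|n IH]; intros i Hi; simpl.
  - split; [lia|]. split; [exact Hi|]. right; lia.
  - destruct (Rle_dec t (x i)) as [H|H].
    + split; [lia|]. split; [exact Hi|]. left; exact H.
    + assert (Hi' : x (S i - 1)%nat <= t) by (replace (S i - 1)%nat with i by lia; lra).
      destruct (IH (S i) Hi') as [H1 [H2 H3]].
      split; [lia|]. split; [exact H2|]. destruct H3 as [H3|H3]; [left; exact H3|right; lia].
Qed.

Lemma seg_spec (x : nat -> R) (N : nat) (t : R) : (1 <= N)%nat -> inI x N t ->
  (1 <= seg x N t <= N)%nat /\ x (seg x N t - 1)%nat <= t /\ t <= x (seg x N t).
Proof.
  intros HN [H0 H1]. unfold seg.
  assert (Hs : x (1 - 1)%nat <= t) by (simpl; exact H0).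
  destruct (find_seg_spec x t (N - 1) 1 Hs) as [A [B C]].
  split; [lia|]. split; [exact B|].
  destruct C as [C|C]; [exact C|]. rewrite C. replace (1 + (N - 1))%nat with N by lia. exact H1.
Qed.

Lemma x_mono (N : nat) (x : nat -> R) (Hx : forall i : nat, (i < N)%nat -> x i < x (S i)) :
  forall i j, (i <= j <= N)%nat -> x i <= x j.
Proof.
  intros i j Hij. induction j as [|j IH].
  - replace i with 0%nat by lia. lra.
  - destruct (Nat.eq_dec i (S j)) as [->|Hne]; [lra|].
    assert (x j < x (S j)) by (apply Hx; lia).
    assert (x i <= x j) by (apply IH; lia). lra.
Qed.

Lemma Qi_in (N : nat) (x : nat -> R) (HN : (1 <= N)%nat)
  (Hx : forall i : nat, (i < N)%nat -> x i < x (S i)) t :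
  inI x N t -> inI x N (Qi x N (seg x N t) t).
Proof.
  intros Ht. destruct (seg_spec x N t HN Ht) as [Hi [H1 H2]].
  set (i := seg x N t) in *.
  assert (Hlt : x (i - 1)%nat < x i).
  { replace i with (S (i - 1)) at 2 by lia. apply Hx. lia. }
  assert (H0N : x 0%nat <= x N) by (apply (x_mono N x Hx); lia).
  unfold Qi, inI.
  set (u := (t - x (i - 1)%nat) / (x i - x (i - 1)%nat)).
  assert (Hu0 : 0 <= u) by (unfold u; apply Rdiv_le_0_compat'; lra).
  assert (Hu1 : u <= 1).
  { unfold u. apply (Rmult_le_reg_r (x i - x (i - 1)%nat)); [lra|].
    unfold Rdiv. rewrite Rmult_assoc, Rinv_l; lra. }
  replace ((x N - x 0%nat) * (t - x (i - 1)%nat) / (x i - x (i - 1)%nat))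
    with ((x N - x 0%nat) * u) by (unfold u, Rdiv; ring).
  split; nra.
Qed.

Theorem mainTheorem10
  (N : nat) (x : nat -> R) (f : R -> R) (alpha : nat -> nat -> R -> R)
  (HN : (1 <= N)%nat)
  (Hx : forall i : nat, (i < N)%nat -> x i < x (S i))
  (Hf : cont_on x N f)
  (Halpha_cont : forall i r : nat, (1 <= i <= N)%nat -> cont_on x N (alpha i r))
  (Halpha_norm : exists s : R, s < 1 /\
     forall (i r : nat) (t : R), (1 <= i <= N)%nat -> inI x N t ->
       Rabs (alpha i r t) <= s) :
  exists L : R, 0 <= L /\
    forall (b c : nat -> R -> R) (phib phic : R -> R),
      in_A f x N b -> in_A f x N c ->
      is_fractal f x N alpha b phib -> is_fractal f x N alpha c phic ->
      forall d : R,
        (forall (r : nat) (t : R), inI x N t -> Rabs (b r t - c r t) <= d) ->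
        forall t : R, inI x N t -> Rabs (phib t - phic t) <= L * d.
Proof.
  destruct Halpha_norm as [s0 [Hs0 Ha]].
  set (s := Rmax s0 0).
  assert (Hs : 0 <= s < 1) by (unfold s; split; [apply Rmax_r|apply Rmax_lub_lt; lra]).
  assert (Ha' : forall i r t, (1 <= i <= N)%nat -> inI x N t -> Rabs (alpha i r t) <= s).
  { intros. eapply Rle_trans; [apply Ha; auto|apply Rmax_l]. }
  exists (s / (1 - s)). split.
  { apply Rdiv_le_0_compat'; lra. }
  intros b c phib phic _ _ Fb Fc d Hd t Ht.
  assert (Hd0 : 0 <= d).
  { assert (inI x N (x 0%nat)).
    { split; [lra|apply (x_mono N x Hx); lia]. }
    eapply Rle_trans; [apply Rabs_pos|apply (Hd 0%nat _ H)]. }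
  assert (Key : forall n k g t, inI x N t ->
    Rabs (compT f x N alpha b k n g t - compT f x N alpha c k n g t) <= s / (1 - s) * d).
  { induction n as [|n IH]; intros k g u Hu; simpl.
    - unfold Rminus. rewrite Rplus_opp_r, Rabs_R0.
      apply Rmult_le_pos; [apply Rdiv_le_0_compat'|]; lra.
    - unfold Top.
      destruct (seg_spec x N u HN Hu) as [Hi _].
      pose proof (Qi_in N x HN Hx u Hu) as HQ.
      set (i := seg x N u) in *. set (q := Qi x N i u) in *.
      set (G := compT f x N alpha b (S k) n g). set (H := compT f x N alpha c (S k) n g).
      replace (f u + alpha i k q * (G q - b k q) - (f u + alpha i k q * (H q - c k q)))
        with (alpha i k q * ((G q - H q) - (b k q - c k q))) by ring.
      rewrite Rabs_mult.
      assert (A1 : Rabs (alpha i k q) <= s) by (apply Ha'; auto).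
      assert (A2 : Rabs ((G q - H q) - (b k q - c k q)) <= s / (1 - s) * d + d).
      { eapply Rle_trans; [apply Rabs_triang|]. rewrite Rabs_Ropp.
        apply Rplus_le_compat; [apply IH; exact HQ|apply Hd; exact HQ]. }
      assert (E : s / (1 - s) * d = s * (s / (1 - s) * d + d)) by (field; lra).
      rewrite E. apply Rmult_le_compat; try apply Rabs_pos; auto. }
  assert (Cf : in_Cf f x N f) by (split; [exact Hf|split; reflexivity]).
  apply Rnot_lt_le. intro Hlt.
  set (e := (Rabs (phib t - phic t) - s / (1 - s) * d) / 3).
  assert (He : 0 < e) by (unfold e; lra).
  destruct (Fb f Cf e He) as [M1 HM1]. destruct (Fc f Cf e He) as [M2 HM2].
  specialize (HM1 (M1 + M2)%nat ltac:(lia) t Ht).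
  specialize (HM2 (M1 + M2)%nat ltac:(lia) t Ht).
  specialize (Key (M1 + M2)%nat 0%nat f t Ht).
  set (P := compT f x N alpha b 0 (M1 + M2) f t) in *.
  set (Q := compT f x N alpha c 0 (M1 + M2) f t) in *.
  assert (Rabs (phib t - phic t) <= Rabs (P - phib t) + Rabs (P - Q) + Rabs (Q - phic t)).
  { replace (phib t - phic t) with (-(P - phib t) + (P - Q) + (Q - phic t)) by ring.
    eapply Rle_trans; [apply Rabs_triang|]. rewrite <- (Rabs_Ropp (P - phib t)).
    apply Rplus_le_compat_r. apply Rabs_triang. }
  unfold e in *. lra.
Qed.
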